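(* Let $P$ be a disjunctive program and let $P_1,P_2,\dots$ be any module sequence for $P$ (induced by any enumeration of $GH$). Then: (1) $\bigcup_{i\ge 1}P_i=\mathsf{Ground}(P)$; (2) for each $i\ge 1$ and each $j\ge i$, $\mathit{atom}(P_i)$ is a splitting set of $P_j$ and $P_i=bot_{\mathit{atom}(P_i)}(P_j)$; (3) for each $i\ge 1$, $\mathit{atom}(P_i)$ is a splitting set of $P$ and $P_i=bot_{\mathit{atom}(P_i)}(P)$; (4) for each $i\ge 1$, $P_i$ is downward closed.
   Context: A disjunctive program is a set of rules $A_1\vee\dots\vee A_m\leftarrow L_1,\dots,L_n$ ($m>0$, $n\ge 0$) where the $A_j$ are atoms and each $L_i$ is an atom $A$ or a negated atom $\mathtt{not}\,A$, over a first-order language possibly containing function symbols. For a rule $r$, $head(r)=\{A_1,\dots,A_m\}$. $\mathsf{Ground}(P)$ is the set of ground instances of rules of $P$ over the Herbrand universe; for a set $X$ of ground rules, $\mathit{atom}(X)$ is the set of ground atoms occurring in $X$, and $\mathit{atom}(r)$ the set of atoms of a ground rule $r$. The dependency graph of $P$ has the ground atoms as vertices and an edge from $A$ to $B$ whenever, for some $r\in\mathsf{Ground}(P)$, $A\in head(r)$ and $B$ occurs in $r$ (positively or negatively in the body, or in the head). $A$ depends on $B$ if there is a directed path from $A$ to $B$ in this graph; every atom depends on itself. $GH=\{p\mid p\in head(r), r\in\mathsf{Ground}(P)\}$. Given an enumeration $p_1,p_2,\dots$ of $GH$, the induced module sequence is $P_1=\{r\in\mathsf{Ground}(P)\mid p_1\text{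 depends on some }A\in head(r)\}$ and $P_{i+1}=P_i\cup\{r\in\mathsf{Ground}(P)\mid p_{i+1}\text{ depends on some }A\in head(r)\}$. For a set $Q$ of ground rules (for a non-ground $P$, take $Q=\mathsf{Ground}(P)$), a splitting set of $Q$ is a set $U$ of ground atoms such that for every $r\in Q$, if $head(r)\cap U\ne\emptyset$ then $\mathit{atom}(r)\subseteq U$; then $bot_U(Q)=\{r\in Q\mid head(r)\cap U\neq\emptyset\}$. A subprogram $P'\subseteq\mathsf{Ground}(P)$ is downward closed if for each atom $A\in\mathit{atom}(P')$, $P'$ contains every $r\in\mathsf{Ground}(P)$ with $A\in head(r)$. *)

(* Defs.v *)
From Stdlib Require Import List Relations.
Import ListNotations.
Set Implicit Arguments.

Section Syntax.
(* F : function symbols (constants are 0-ary), ar : their arities,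
   Pr : predicate symbols. Variables are indexed by nat. *)
Variables (F Pr : Type) (ar : F -> nat).

Inductive term : Type :=
| Var : nat -> term
| App : F -> list term -> term.

Definition atom : Type := (Pr * list term)%type.

Inductive literal : Type :=
| Pos : atom -> literal
| Neg : atom -> literal.

Definition lit_atom (l : literal) : atom :=
  match l with Pos a => a | Neg a => a end.

(* A1 v ... v Am <- L1, ..., Ln *)
Record rule : Type := mkRule { head : list atom; body : list literal }.

Definition program := rule -> Prop.

Definition disjunctive_program (P : program) : Prop :=
  forall r, P r -> head r <> [].

Fixpoint in_HU (t : term) : Prop :=
  match t with
  | Var _ => False
  | App f l => length l = ar f /\
      (fix all (l : list term) : Prop :=
         match l with [] => True | t :: l' => in_HU t /\ all l' end) l
  end.

Fixpoint var_in_term (x : nat) (t : term) : Prop :=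
  match t with
  | Var y => x = y
  | App _ l =>
      (fix ex (l : list term) : Prop :=
         match l with [] => False | t :: l' => var_in_term x t \/ ex l' end) l
  end.

Fixpoint subst_term (s : nat -> term) (t : term) : term :=
  match t with
  | Var y => s y
  | App f l => App f (map (subst_term s) l)
  end.

Definition subst_atom (s : nat -> term) (a : atom) : atom :=
  (fst a, map (subst_term s) (snd a)).

Definition subst_lit (s : nat -> term) (l : literal) : literal :=
  match l with Pos a => Pos (subst_atom s a) | Neg a => Neg (subst_atom s a) end.

Definition subst_rule (s : nat -> term) (r : rule) : rule :=
  mkRule (map (subst_atom s) (head r)) (map (subst_lit s) (body r)).

Definition rule_atoms (r : rule) : list atom :=
  head r ++ map lit_atom (body r).

Definition var_in_rule (x : nat) (r : rule) : Prop :=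
  exists a, In a (rule_atoms r) /\ exists t, In t (snd a) /\ var_in_term x t.

Definition Ground (P : program) : program :=
  fun r' => exists r s, P r /\
    (forall x, var_in_rule x r -> in_HU (s x)) /\ r' = subst_rule s r.

Definition atoms_of (X : program) : atom -> Prop :=
  fun A => exists r, X r /\ In A (rule_atoms r).

Definition dep_edge (P : program) (A B : atom) : Prop :=
  exists r, Ground P r /\ In A (head r) /\ In B (rule_atoms r).

Definition depends (P : program) : atom -> atom -> Prop :=
  clos_refl_trans atom (dep_edge P).

Definition GH (P : program) : atom -> Prop :=
  fun p => exists r, Ground P r /\ In p (head r).

(* An enumeration of GH, 0-indexed: len = None means an infinite
   enumeration e 0, e 1, ...; len = Some n means e 0, ..., e (n-1). *)
Definition in_range (len : option nat) (i : nat) : Prop :=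
  match len with None => True | Some n => i < n end.

Definition is_enumeration (S : atom -> Prop) (len : option nat) (e : nat -> atom)
  : Prop :=
  (forall i, in_range len i -> S (e i)) /\
  (forall p, S p -> exists i, in_range len i /\ e i = p) /\
  (forall i j, in_range len i -> in_range len j -> e i = e j -> i = j).

Definition module_step (P : program) (p : atom) : program :=
  fun r => Ground P r /\ exists A, In A (head r) /\ depends P p A.

(* induced module sequence (module P e i is P_{i+1} of the paper) *)
Fixpoint module (P : program) (e : nat -> atom) (i : nat) : program :=
  match i with
  | 0 => module_step P (e 0)
  | S k => fun r => module P e k r \/ module_step P (e (S k)) r
  end.

Definition splitting_set (U : atom -> Prop) (Q : program) : Prop :=
  forall r, Q r -> (exists A, In A (head r) /\ U A) ->
    forall A, In A (rule_atoms r) -> U A.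

Definition bot (U : atom -> Prop) (Q : program) : program :=
  fun r => Q r /\ exists A, In A (head r) /\ U A.

Definition same_rules (X Y : program) : Prop := forall r, X r <-> Y r.

Definition downward_closed (P : program) (X : program) : Prop :=
  forall A, atoms_of X A -> forall r, Ground P r -> In A (head r) -> X r.

End Syntax.

(* Main.v *)
Require Import Defs.
From Stdlib Require Import List Relations Lia Arith.

Set Implicit Arguments.
Lemma module_char (F Pr : Type) (ar : F -> nat) (P : program F Pr) e i r :
  module ar P e i r <-> exists k, k <= i /\ module_step ar P (e k) r.
Proof.
  induction i as [|i IH]; simpl.
  - split; [intros H; exists 0; split; [lia|exact H]|].
    intros [k [Hk H]]. assert (k = 0) by lia. subst; exact H.
  - split.
    + intros [H|H].
      * apply IH in H. destruct H as [k [Hk H]]. exists k. split; [lia|exact H].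
      * exists (S i). split; [lia|exact H].
    + intros [k [Hk H]]. destruct (Nat.eq_dec k (S i)) as [->|Hne].
      * right; exact H.
      * left; apply IH. exists k. split; [lia|exact H].
Qed.

Set Implicit Arguments.
Lemma atoms_dep (F Pr : Type) (ar : F -> nat) (P : program F Pr) e i A :
  atoms_of (module ar P e i) A -> exists k, k <= i /\ depends ar P (e k) A.
Proof.
  intros [r [Hr HA]]. apply module_char in Hr.
  destruct Hr as [k [Hk [Hg [B [HB Hd]]]]].
  exists k. split; [exact Hk|].
  eapply rt_trans; [exact Hd|]. apply rt_step. unfold dep_edge. exists r. auto.
Qed.

Set Implicit Arguments.
Lemma in_module (F Pr : Type) (ar : F -> nat) (P : program F Pr) e i A r :
  atoms_of (module ar P e i) A -> Ground ar P r -> In A (Defs.head r) ->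
  module ar P e i r.
Proof.
  intros HA Hg Hh. destruct (@atoms_dep F Pr ar P e i A HA) as [k [Hk Hd]].
  apply module_char. exists k. split; [exact Hk|]. split; [exact Hg|].
  exists A. auto.
Qed.

Set Implicit Arguments.
Lemma module_ground (F Pr : Type) (ar : F -> nat) (P : program F Pr) e i r :
  module ar P e i r -> Ground ar P r.
Proof. intros H. apply module_char in H. destruct H as [k [_ [H _]]]. exact H. Qed.

Set Implicit Arguments.
Lemma module_self (F Pr : Type) (ar : F -> nat) (P : program F Pr) e i r :
  module ar P e i r -> exists A, In A (Defs.head r) /\ atoms_of (module ar P e i) A.
Proof.
  intros H. pose proof H as H'. apply module_char in H'.
  destruct H' as [k [_ [_ [A [HA _]]]]]. exists A. split; [exact HA|].
  exists r. split; [exact H|]. unfold rule_atoms. apply in_or_app. auto.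
Qed.

Set Implicit Arguments.
Lemma module_mono (F Pr : Type) (ar : F -> nat) (P : program F Pr) e i j r :
  i <= j -> module ar P e i r -> module ar P e j r.
Proof.
  intros Hij H. apply module_char in H. apply module_char.
  destruct H as [k [Hk H]]. exists k. split; [lia|exact H].
Qed.

Set Implicit Arguments.
Lemma split_gen (F Pr : Type) (ar : F -> nat) (P : program F Pr) e i (Q : program F Pr) :
  (forall r, Q r -> Ground ar P r) ->
  splitting_set (atoms_of (module ar P e i)) Q.
Proof.
  intros HQ r Hr [A [HA HU]] B HB.
  exists r. split; [|exact HB]. eapply in_module; eauto.
Qed.

Theorem proposition3p2 (F Pr : Type) (ar : F -> nat) (P : program F Pr)
  (len : option nat) (e : nat -> atom F Pr) :
  disjunctive_program P ->
  is_enumeration (GH ar P) len e ->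
  (* (1) *)
  (forall r, Ground ar P r <-> exists i, in_range len i /\ module ar P e i r) /\
  (* (2) *)
  (forall i j, in_range len i -> in_range len j -> i <= j ->
     splitting_set (atoms_of (module ar P e i)) (module ar P e j) /\
     same_rules (module ar P e i)
                (bot (atoms_of (module ar P e i)) (module ar P e j))) /\
  (* (3) *)
  (forall i, in_range len i ->
     splitting_set (atoms_of (module ar P e i)) (Ground ar P) /\
     same_rules (module ar P e i)
                (bot (atoms_of (module ar P e i)) (Ground ar P))) /\
  (* (4) *)
  (forall i, in_range len i -> downward_closed ar P (module ar P e i)).
Proof.
  intros Hdisj [Hen1 [Hen2 Hen3]].
  split; [|split; [|split]].
  - intros r. split.
    + intros Hg. pose proof Hg as Hg'.
      destruct Hg' as [r0 [s [Hr0 [_ ->]]]].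
      destruct (Defs.head r0) as [|A l] eqn:Eh; [exfalso; exact (Hdisj r0 Hr0 Eh)|].
      set (A' := subst_atom s A).
      assert (HA : In A' (Defs.head (subst_rule s r0))) by (simpl; rewrite Eh; left; reflexivity).
      destruct (Hen2 A') as [i [Hi Hei]]; [exists (subst_rule s r0); auto|].
      exists i. split; [exact Hi|]. apply module_char. exists i. split; [lia|].
      split; [exact Hg|]. exists A'. split; [exact HA|]. rewrite Hei. apply rt_refl.
    + intros [i [_ H]]. eapply module_ground; eauto.
  - intros i j _ _ Hij. split.
    + apply split_gen. intros r H. eapply module_ground; eauto.
    + intros r. split.
      * intros H. split; [eapply module_mono; eauto|]. apply module_self; exact H.
      * intros [Hr [A [HA HU]]]. eapply in_module; eauto. eapply module_ground; eauto.
  - intros i _. split.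
    + apply split_gen. auto.
    + intros r. split.
      * intros H. split; [eapply module_ground; eauto|]. apply module_self; exact H.
      * intros [Hr [A [HA HU]]]. eapply in_module; eauto.
  - intros i _ A HA r Hg Hh. eapply in_module; eauto.
Qed.
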